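(* Suppose that $$g[\![\rho]\!]p_1^2+\int_{p_1}^0\Big(\Gamma_{\mathrm{rel}}(p)^3+p^2\Gamma_{\mathrm{rel}}(p)\Big)dp<0 .$$ Then $\inf_{\lambda>0}\nu(\lambda)<-1$.
   Context: Constants $g>0$, $p_0<p_1<0$, $[\![\rho]\!]<0$ (density jump air minus water); $\Gamma_{\mathrm{rel}}:[p_1,0]\to(0,\infty)$ a given continuous function (prescribed relative circulation). For $\lambda>0$ let $a(p)=\Gamma_{\mathrm{rel}}(p)$ for $p_1<p<0$, $a(p)=\lambda$ for $p_0<p<p_1$; $\mathscr A=\{\varphi\in H^1((p_0,0)):\varphi(p_0)=\varphi(0)=0\}$; $\mathscr R(\varphi;\lambda)=\dfrac{g[\![\rho]\!]\varphi(p_1)^2+\int_{p_0}^0a^3\varphi_p^2\,dp}{\int_{p_0}^0a\varphi^2\,dp}$; $\nu(\lambda)=\inf_{\varphi\in\mathscr A,\varphi\not\equiv0}\mathscr R(\varphi;\lambda)$. *)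

(* Defs.v *)
From HB Require Import structures.
From mathcomp Require Import all_boot all_order all_algebra.
From mathcomp Require Import all_classical all_reals all_analysis.
Set Implicit Arguments. Unset Strict Implicit. Unset Printing Implicit Defensive.
Import Order.TTheory GRing.Theory Num.Theory.
Import numFieldNormedType.Exports.
Local Open Scope classical_set_scope.
Local Open Scope ring_scope.

Section Defs.
Variable R : realType.
Local Notation mu := (@lebesgue_measure R).

(* a(p) = Gamma_rel(p) for p1 < p, and = lambda for p <= p1
   (the value at the single point p1 is irrelevant: null set). *)
Definition acoef (p1 lam : R) (Gam : R -> R) (p : R) : R :=
  if p1 < p then Gam p else lam.

(* (phi, phip) represents an element phi of
   A = { phi in H^1((p0,0)) : phi(p0) = phi(0) = 0 }
   via its (absolutely) continuous representative: phip is in L^2((p0,0))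
   (measurable, integrable, square integrable), phi is its primitive
   starting from phi(p0) = 0 on [p0,0], and phi(0) = 0.  phip is then the
   weak derivative phi_p. *)
Definition inA (p0 : R) (phi phip : R -> R) : Prop :=
  [/\ measurable_fun `[p0, 0] phip,
      mu.-integrable `[p0, 0] (EFin \o phip),
      (\int[mu]_(x in `[p0, 0%R]) ((phip x) ^+ 2)%:E < +oo)%E,
      (forall x, p0 <= x <= 0 -> phi x = Rintegral mu `[p0, x] phip)
    & phi 0 = 0].

(* Rayleigh quotient R(phi; lambda); rho = [[rho]] the density jump. *)
Definition rayleigh (g rho p0 p1 lam : R) (Gam : R -> R)
    (phi phip : R -> R) : R :=
  (g * rho * (phi p1) ^+ 2
     + Rintegral mu `]p0, 0[ (fun p => (acoef p1 lam Gam p) ^+ 3 * (phip p) ^+ 2))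
  / Rintegral mu `]p0, 0[ (fun p => acoef p1 lam Gam p * (phi p) ^+ 2).

Definition nu (g rho p0 p1 : R) (Gam : R -> R) (lam : R) : \bar R :=
  ereal_inf [set r : \bar R | exists phi phip : R -> R,
               [/\ inA p0 phi phip,
                   (exists x, p0 <= x <= 0 /\ phi x != 0)
                 & r = (rayleigh g rho p0 p1 lam Gam phi phip)%:E]].
End Defs.

(* Main.v *)
Require Import Defs.
From HB Require Import structures.
From mathcomp Require Import all_boot all_order all_algebra.
From mathcomp Require Import all_classical all_reals all_analysis.
From mathcomp Require Import measurable_realfun ring lra.
Import Order.TTheory GRing.Theory Num.Theory.
Import numFieldNormedType.Exports.
Local Open Scope classical_set_scope.
Local Open Scope ring_scope.
Section S.
Context {R : realType}.
Local Notation mu := (@lebesgue_measure R).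

Lemma int_setU (A B : set R) (f : R -> \bar R) : measurable A -> measurable B ->
  [disjoint A & B] -> mu.-integrable A f -> mu.-integrable B f ->
  mu.-integrable (A `|` B) f.
Proof.
move=> mA mB dAB iA iB.
have mAB : measurable_fun (A `|` B) f.
  by apply/(measurable_funU f mA mB); split; exact: (measurable_int mu).
apply/integrableP; split => //.
rewrite integral_setU//; last exact: measurableT_comp.
case/integrableP: iA => _ iA; case/integrableP: iB => _ iB.
exact: lte_add_pinfty.
Qed.

Lemma Rint_split (A B : set R) (f : R -> R) : measurable A -> measurable B ->
  [disjoint A & B] -> mu.-integrable A (EFin \o f) -> mu.-integrable B (EFin \o f) ->
  Rintegral mu (A `|` B) f = Rintegral mu A f + Rintegral mu B f.
Proof.
move=> mA mB dAB iA iB.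
by rewrite Rintegral_setU//; exact: int_setU.
Qed.

Lemma disj_m (a b : itv_bound R) (m : R) :
  [disjoint [set` Interval a (BRight m)] & [set` Interval (BRight m) b]].
Proof.
apply/eqP/seteqP; split=> // x [/=]; rewrite !itv_boundlr => /andP[_ h1] /andP[h2 _].
rewrite !bnd_simp in h1 h2.
by move: (lt_le_trans h2 h1); rewrite ltxx.
Qed.

Lemma mu_itv (a b : R) : a <= b -> fine (mu `]a, b]) = b - a.
Proof.
move=> ab; rewrite lebesgue_measure_itv /= lte_fin.
case: ifPn => h //=; rewrite -leNgt in h.
have -> : a = b by apply/eqP; rewrite eq_le ab h.
by rewrite subrr.
Qed.
Lemma mu_itvc (a b : R) : a <= b -> fine (mu `[a, b]) = b - a.
Proof.
move=> ab; rewrite lebesgue_measure_itv /= lte_fin.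
case: ifPn => h //=; rewrite -leNgt in h.
have -> : a = b by apply/eqP; rewrite eq_le ab h.
by rewrite subrr.
Qed.
Lemma split_oc {a m b : R} : a <= m -> m <= b ->
  `]a, b]%classic = `]a, m]%classic `|` `]m, b]%classic :> set R.
Proof. by move=> am mb; rewrite (@itv_bndbnd_setU _ _ _ (BRight m)) // bnd_simp. Qed.
Lemma split_oo {a m b : R} : a <= m -> m < b ->
  `]a, b[%classic = `]a, m]%classic `|` `]m, b[%classic :> set R.
Proof. by move=> am mb; rewrite (@itv_bndbnd_setU _ _ _ (BRight m)) // bnd_simp. Qed.
Lemma split_cc {a m b : R} : a <= m -> m <= b ->
  `[a, b]%classic = `[a, m]%classic `|` `]m, b]%classic :> set R.
Proof. by move=> am mb; rewrite (@itv_bndbnd_setU _ _ _ (BRight m)) // bnd_simp. Qed.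

Lemma cont_int {a b : R} {f : R -> R} : {within `[a, b], continuous f} ->
  mu.-integrable `[a, b] (EFin \o f).
Proof. by move=> cf; apply: continuous_compact_integrable => //; exact: segment_compact. Qed.

Lemma cst_int (a b r : R) : mu.-integrable `[a, b] (EFin \o (fun _ => r)).
Proof. by apply: cont_int; apply: continuous_subspaceT => x; exact: cvg_cst. Qed.

Lemma int_eq (D : set R) (f g : R -> R) : measurable D -> {in D, f =1 g} ->
  mu.-integrable D (EFin \o g) -> mu.-integrable D (EFin \o f).
Proof. by move=> mD fg; apply: eq_integrable => // x xD /=; rewrite fg. Qed.

Lemma oo_cc {a b : R} {f : R -> R} : mu.-integrable `[a, b] (EFin \o f) ->
  Rintegral mu `]a, b[ f = Rintegral mu `[a, b] f.
Proof.
move=> i.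
rewrite Rintegral_itv_obnd_cbnd; last first.
  by apply: integrableS i => //; apply: subset_itv; rewrite bnd_simp.
rewrite Rintegral_itv_bndo_bndc //.
by apply: integrableS i => //; apply: subset_itv; rewrite bnd_simp.
Qed.

Lemma int_pw {a m b : R} (u v : R) {f : R -> R} : a <= m -> m <= b ->
  (forall x, a <= x <= m -> f x = u) -> (forall x, m < x <= b -> f x = v) ->
  mu.-integrable `[a, b] (EFin \o f).
Proof.
move=> am mb fu fv; rewrite (split_cc am mb); apply: int_setU => //.
- exact: disj_m.
- apply: (@int_eq _ _ (fun _ => u)) => //; last exact: cst_int.
  by move=> x; rewrite inE /= in_itv /= => h; rewrite fu.
- apply: (@int_eq _ _ (fun _ => v)) => //; last first.
    by apply: integrableS (cst_int m b v) => //; apply: subset_itv; rewrite !bnd_simp ?lexx.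
  by move=> x; rewrite inE /= in_itv /= => h; rewrite fv.
Qed.

Lemma wc {a b : R} {G : R -> R} : {within `[a, b], continuous G} ->
  {within `[a, b], continuous (fun p => G p ^+ 3)} /\
  {within `[a, b], continuous (fun p => p ^+ 2 * G p)}.
Proof.
move=> cG; split => x.
  exact: (continuous_comp (cG x) (@exprn_continuous R 3 _)).
have hsq : {within `[a, b], continuous (fun p : R => p ^+ 2)}.
  by apply: continuous_subspaceT => y; exact: exprn_continuous.
exact: (continuousM (hsq x) (cG x)).
Qed.
End S.

Section Arith.
Context {R : realType}.
Lemma fin_arith (X G1 G3 Q A B a : R) : 0 < a -> a <= 1 -> 0 < A ->
  X + (G3 + G1) < 0 -> Q <= a * B -> a * (A + B) <= - (X + (G3 + G1)) / 2 ->
  X + (a ^+ 3 * A + G3) < -1 * (Q + G1).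
Proof.
move=> a0 a1 A0 hK hQ hl.
have l3 : a ^+ 3 * A <= a * A.
  apply: ler_wpM2r; first exact: ltW.
  rewrite !exprS expr0 mulr1; nra.
nra.
Qed.
End Arith.
Theorem lemma4p6 (R : realType) (g p0 p1 rho : R) (Gam : R -> R) :
  0 < g -> p0 < p1 -> p1 < 0 -> rho < 0 ->
  {within `[p1, 0], continuous Gam} ->
  (forall p, p1 <= p <= 0 -> 0 < Gam p) ->
  g * rho * p1 ^+ 2
    + Rintegral (@lebesgue_measure R) `[p1, 0]
        (fun p => Gam p ^+ 3 + p ^+ 2 * Gam p) < 0 ->
  (ereal_inf [set nu g rho p0 p1 Gam lam | lam in `]0%R, +oo[%classic] < (-1)%:E)%E.
Proof.
move=> g0 p01 p10 rho0 cG Gpos hK.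
have [c3 c1] := wc cG.
have iG3 := cont_int c3.
have iG1 := cont_int c1.
set G3 := Rintegral (@lebesgue_measure R) `[p1, 0] (fun p => Gam p ^+ 3).
set G1 := Rintegral (@lebesgue_measure R) `[p1, 0] (fun p => p ^+ 2 * Gam p).
have hsum : Rintegral (@lebesgue_measure R) `[p1, 0]
        (fun p => Gam p ^+ 3 + p ^+ 2 * Gam p) = G3 + G1 by rewrite RintegralD.
rewrite hsum in hK.
have G1ge : 0 <= G1.
  apply: Rintegral_ge0 => x; rewrite /= in_itv /= => /andP[h1 h2].
  by apply: mulr_ge0; [exact: sqr_ge0 | apply: ltW; apply: Gpos; rewrite h1 h2].
set d := p1 - p0.
have d0 : 0 < d by rewrite /d subr_gt0.
set c := p1 / d.
have hc : c * d = p1 by rewrite /c divfK // gt_eqF.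
have c0 : c < 0 by rewrite /c pmulr_llt0 ?invr_gt0.
set A0 := c ^+ 2 * d.
set B0 := p1 ^+ 2 * d.
have A00 : 0 < A0 by rewrite /A0 mulr_gt0 // exprn_even_gt0 //= lt_eqF.
have B00 : 0 < B0 by rewrite /B0 mulr_gt0 // exprn_even_gt0 //= lt_eqF.
set K := g * rho * p1 ^+ 2 + (G3 + G1).
set lam := Num.min 1 (- K / (2 * (A0 + B0))).
have lam0 : 0 < lam.
  by rewrite lt_min ltr01 /= divr_gt0 ?oppr_gt0 // mulr_gt0 // addr_gt0.
have lam1 : lam <= 1 by rewrite ge_min lexx.
have lamK : lam * (A0 + B0) <= - K / 2.
  have : lam <= - K / (2 * (A0 + B0)) by rewrite ge_min lexx orbT.
  move/(ler_wpM2r (ltW (addr_gt0 A00 B00))).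
  suff -> : - K / (2 * (A0 + B0)) * (A0 + B0) = - K / 2 by [].
  by field; rewrite gt_eqF // addr_gt0.
pose phip := fun x : R => if p1 < x then 1 else c.
pose phi := fun x : R => if p1 < x then x else c * (x - p0).
have hN : Rintegral (@lebesgue_measure R) `]p0, 0[
    (fun p => acoef p1 lam Gam p ^+ 3 * phip p ^+ 2) = lam ^+ 3 * A0 + G3.
  have i2 : (@lebesgue_measure R).-integrable `]p1, 0[
      (EFin \o (fun p => acoef p1 lam Gam p ^+ 3 * phip p ^+ 2)).
    apply: (@int_eq _ _ _ (fun p => Gam p ^+ 3)) => //.
      by move=> x; rewrite inE /= in_itv /= => /andP[h1 h2]; rewrite /acoef /phip h1 expr1n mulr1.
    by apply: integrableS iG3 => //; apply: subset_itv; rewrite bnd_simp.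
  have i1 : (@lebesgue_measure R).-integrable `]p0, p1]
      (EFin \o (fun p => acoef p1 lam Gam p ^+ 3 * phip p ^+ 2)).
    apply: (@int_eq _ _ _ (fun _ => lam ^+ 3 * c ^+ 2)) => //.
      by move=> x; rewrite inE /= in_itv /= => /andP[h1 h2]; rewrite /acoef /phip ltNge h2.
    by apply: integrableS (cst_int p0 p1 _) => //; apply: subset_itv; rewrite bnd_simp.
  rewrite (split_oo (ltW p01) p10) Rint_split //; last exact: disj_m.
  rewrite (@eq_Rintegral _ _ _ _ _ (fun _ => lam ^+ 3 * c ^+ 2)); last first.
    by move=> x; rewrite inE /= in_itv /= => /andP[h1 h2]; rewrite /acoef /phip ltNge h2.
  rewrite Rintegral_cst // mu_itv; last exact: ltW.
  have -> : Rintegral (@lebesgue_measure R) `]p1, 0[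
      (fun p => acoef p1 lam Gam p ^+ 3 * phip p ^+ 2) = G3.
    rewrite /G3 -(oo_cc iG3); apply: eq_Rintegral.
    by move=> x; rewrite inE /= in_itv /= => /andP[h1 h2]; rewrite /acoef /phip h1 expr1n mulr1.
  by rewrite /A0 /d; ring.
pose q := fun x : R => lam * (c * (x - p0)) ^+ 2.
have cq : continuous q.
  move=> x.
  have h1 : {for x, continuous (fun y : R => c * (y - p0))}.
    apply: (@continuousM _ _ (fun _ => c) (fun y => y - p0)); first exact: cvg_cst.
    apply: (@continuousB _ _ _ (fun y => y) (fun _ => p0)); [exact: cvg_id | exact: cvg_cst].
  have h2 := continuous_comp h1 (@exprn_continuous R 2 _).
  exact: (@continuousM _ _ (fun _ => lam) _ x (cvg_cst _) h2).
have iq : forall a b, (@lebesgue_measure R).-integrable `[a, b] (EFin \o q).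
  by move=> a b; apply: cont_int; apply: continuous_subspaceT.
set Q := Rintegral (@lebesgue_measure R) `]p0, p1] q.
have hD : Rintegral (@lebesgue_measure R) `]p0, 0[
    (fun p => acoef p1 lam Gam p * phi p ^+ 2) = Q + G1.
  have i2 : (@lebesgue_measure R).-integrable `]p1, 0[
      (EFin \o (fun p => acoef p1 lam Gam p * phi p ^+ 2)).
    apply: (@int_eq _ _ _ (fun p => p ^+ 2 * Gam p)) => //.
      by move=> x; rewrite inE /= in_itv /= => /andP[h1 h2]; rewrite /acoef /phi h1 mulrC.
    by apply: integrableS iG1 => //; apply: subset_itv; rewrite bnd_simp.
  have i1 : (@lebesgue_measure R).-integrable `]p0, p1]
      (EFin \o (fun p => acoef p1 lam Gam p * phi p ^+ 2)).
    apply: (@int_eq _ _ _ q) => //.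
      by move=> x; rewrite inE /= in_itv /= => /andP[h1 h2]; rewrite /acoef /phi ltNge h2.
    by apply: integrableS (iq p0 p1) => //; apply: subset_itv; rewrite bnd_simp.
  rewrite (split_oo (ltW p01) p10) Rint_split //; last exact: disj_m.
  have -> : Rintegral (@lebesgue_measure R) `]p0, p1]
      (fun p => acoef p1 lam Gam p * phi p ^+ 2) = Q.
    apply: eq_Rintegral.
    by move=> x; rewrite inE /= in_itv /= => /andP[h1 h2]; rewrite /acoef /phi ltNge h2.
  have -> : Rintegral (@lebesgue_measure R) `]p1, 0[
      (fun p => acoef p1 lam Gam p * phi p ^+ 2) = G1.
    rewrite /G1 -(oo_cc iG1); apply: eq_Rintegral.
    by move=> x; rewrite inE /= in_itv /= => /andP[h1 h2]; rewrite /acoef /phi h1 mulrC.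
  by [].
have iqoc : forall a b, (@lebesgue_measure R).-integrable `]a, b] (EFin \o q).
  by move=> a b; apply: integrableS (iq a b) => //; apply: subset_itv; rewrite bnd_simp.
have Qup : Q <= lam * B0.
  apply: (@le_trans _ _ (Rintegral (@lebesgue_measure R) `]p0, p1] (fun _ => lam * p1 ^+ 2))).
    apply: le_Rintegral => //.
    - by apply: integrableS (cst_int p0 p1 _) => //; apply: subset_itv; rewrite bnd_simp.
    - move=> x; rewrite /= in_itv /= => /andP[h1 h2].
      rewrite /q; apply: ler_wpM2l; first exact: ltW.
      have e1 : p1 <= c * (x - p0) by rewrite -hc /d; nra.
      have e2 : c * (x - p0) <= 0 by nra.
      rewrite -subr_ge0.
      have -> : p1 ^+ 2 - (c * (x - p0)) ^+ 2 = (c * (x - p0) - p1) * (- (c * (x - p0) + p1)) by ring.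
      by apply: mulr_ge0; lra.
  rewrite Rintegral_cst // (mu_itv p0 p1 (ltW p01)) /B0 /d; nra.
have Qpos : 0 < Q.
  set m := (p0 + p1) / 2.
  have pm : p0 <= m by rewrite /m; lra.
  have mp : m <= p1 by rewrite /m; lra.
  rewrite /Q (split_oc pm mp) Rint_split //; last exact: disj_m.
  have h1 : 0 <= Rintegral (@lebesgue_measure R) `]p0, m] q.
    by apply: Rintegral_ge0 => x _; apply: mulr_ge0; [exact: ltW | exact: sqr_ge0].
  have h2 : lam * (p1 / 2) ^+ 2 * (p1 - m) <= Rintegral (@lebesgue_measure R) `]m, p1] q.
    rewrite -(mu_itv m p1 mp) -Rintegral_cst //.
    apply: le_Rintegral => //.
    - by apply: integrableS (cst_int m p1 _) => //; apply: subset_itv; rewrite bnd_simp.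
    - move=> x; rewrite /= in_itv /= => /andP[h3 h4].
      rewrite /q; apply: ler_wpM2l; first exact: ltW.
      have e1 : c * (x - p0) <= p1 / 2.
        have -> : p1 / 2 = c * (d / 2) by rewrite -hc; field.
        rewrite /m in h3; rewrite /d; nra.
      have e2 : p1 / 2 < 0 by lra.
      rewrite -subr_ge0.
      have -> : (c * (x - p0)) ^+ 2 - (p1 / 2) ^+ 2 = (p1 / 2 - c * (x - p0)) * (- (c * (x - p0) + p1 / 2)) by ring.
      by apply: mulr_ge0; lra.
  have h3 : 0 < lam * (p1 / 2) ^+ 2 * (p1 - m).
    have s0 : 0 < (p1 / 2) ^+ 2 by rewrite expr2; nra.
    apply: mulr_gt0; first exact: mulr_gt0.
    by rewrite /m; lra.
  apply: (lt_le_trans h3); apply: (le_trans h2); by rewrite -subr_ge0 addrK.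
have ip : (@lebesgue_measure R).-integrable `[p0, 0] (EFin \o phip).
  apply: (int_pw c 1 (ltW p01) (ltW p10)).
    by move=> x /andP[_ h]; rewrite /phip ltNge h.
  by move=> x /andP[h _]; rewrite /phip h.
have ip2 : (@lebesgue_measure R).-integrable `[p0, 0] (EFin \o (fun x => phip x ^+ 2)).
  apply: (int_pw (c ^+ 2) 1 (ltW p01) (ltW p10)).
    by move=> x /andP[_ h]; rewrite /phip ltNge h.
  by move=> x /andP[h _]; rewrite /phip h expr1n.
have hA : inA p0 phi phip.
  split => //.
  - by apply/measurable_EFinP; exact: (measurable_int _ ip).
  - by rewrite ltey_eq (integrable_fin_num _ ip2).
  - move=> x /andP[hx1 hx2].
    case: (leP x p1) => hx.
    + rewrite /phi ltNge hx /=.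
      rewrite (@eq_Rintegral _ _ _ _ _ (fun _ => c)); last first.
        by move=> y; rewrite inE /= in_itv /= => /andP[h1 h2]; rewrite /phip ltNge (le_trans h2 hx).
      by rewrite Rintegral_cst // mu_itvc // mulrC.
    + rewrite /phi hx.
      rewrite (split_cc (ltW p01) (ltW hx)) Rint_split //; first last.
      * by apply: integrableS ip => //; apply: subset_itv; rewrite bnd_simp ?(ltW p01).
      * by apply: integrableS ip => //; apply: subset_itv; rewrite bnd_simp ?(ltW p10).
      * exact: disj_m.
      rewrite (@eq_Rintegral _ _ _ _ _ (fun _ => c)); last first.
        by move=> y; rewrite inE /= in_itv /= => /andP[h1 h2]; rewrite /phip ltNge h2.
      rewrite Rintegral_cst // (mu_itvc p0 p1 (ltW p01)).
      have -> : Rintegral (@lebesgue_measure R) `]p1, x] phip = x - p1.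
        rewrite (@eq_Rintegral _ _ _ _ _ (fun _ => 1)); last first.
          by move=> y; rewrite inE /= in_itv /= => /andP[h1 h2]; rewrite /phip h1.
        by rewrite Rintegral_cst // (mu_itv p1 x (ltW hx)) mul1r.
      by rewrite hc addrC subrK.
  - by rewrite /phi p10.
have hR : rayleigh g rho p0 p1 lam Gam phi phip < -1.
  rewrite /rayleigh hN hD.
  have -> : phi p1 = p1 by rewrite /phi ltxx; exact: hc.
  rewrite ltr_pdivrMr; last by apply: (lt_le_trans Qpos); rewrite lerDl.
  exact: (@fin_arith R (g * rho * p1 ^+ 2) G1 G3 Q A0 B0 lam lam0 lam1 A00 hK Qup lamK).
apply: (@le_lt_trans _ _ (rayleigh g rho p0 p1 lam Gam phi phip)%:E); last by rewrite lte_fin.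
apply: ge_ereal_inf; exists (nu g rho p0 p1 Gam lam).
  by exists lam => //; rewrite /= in_itv /= andbT.
apply: ge_ereal_inf; exists (rayleigh g rho p0 p1 lam Gam phi phip)%:E => //.
exists phi, phip; split => //.
exists p1; split; first by rewrite (ltW p01) (ltW p10).
by rewrite /phi ltxx hc lt_eqF.
Qed.
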